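(* Let $G_H$ be a finite undirected multigraph (parallel edges allowed, no self-loops) with vertex set $V$ and edge set partitioned as $E = S \sqcup S^c$ into secure edges $S$ and insecure edges $S^c$, and let $0 < p_J^{S^c} \le p_J^{S} \le p_I$ be real costs satisfying $p_J^{S^c} < p_I/2$ and $p_J^{S} + p_J^{S^c} \ge p_I$. Consider the following two problems. (II-A) Give weight $p_I - p_J^{S^c}$ to secure edges and $p_J^{S^c}$ to insecure edges, and find a cut $C^*$ of minimum weight among cuts $C$ with $n^S_C < |C|/2$; form the attack on $C^*$ that injects data into $n^S_{C^*}+1$ insecure edges of $C^*$ and jams all other insecure edges of $C^*$. (II-B) Give weight $p_J^{S}$ to secure edges and $p_I - p_J^{S}$ to insecure edges, and find a cut $C^*$ of minimum weight among cuts $C$ with $n^S_C \ge |C|/2$ and $n^{S^c}_C > 0$; form the attack on $C^*$ that injects data into all insecure edges of $C^*$ and jams $n^S_{C^*} + 1 - n^{S^c}_{C^*}$ secure edges of $C^*$. Then, among the attacks produced by those of the two problems that have a feasible solution, one of minimum cost is an optimal detectable generalized attack in $G_H$.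
   Context: For a nonempty proper subset $U \subsetneq V$, the cut $\delta(U)$ is the set of edges with exactly one endpoint in $U$; a cut of $G_H$ is any set of this form. For a cut $C$, $n^S_C = |C\cap S|$ and $n^{S^c}_C = |C \cap S^c|$. The costs are: $p_J^{S^c}$ per jammed insecure edge, $p_J^S$ per jammed secure edge, $p_I$ per insecure edge with injected data. A generalized attack is a triple $(C,J,I)$ where $C$ is a cut, $J \subseteq C$ is the set of jammed edges, and $I \subseteq (C \cap S^c)\setminus J$ is a nonempty set of injected edges; its cost is $p_J^{S}|J\cap S| + p_J^{S^c}|J \cap S^c| + p_I |I|$. The attack is detectable if $2|I| > |C \setminus J|$ (the injected edges form a strict majority of the non-jammed edges of the cut). An optimal detectable generalized attack is one of minimum cost among all detectable generalized attacks. *)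

(* Defs.v *)
From HB Require Import structures.
From mathcomp Require Import all_boot all_order all_algebra.
Set Implicit Arguments. Unset Strict Implicit. Unset Printing Implicit Defensive.
Import Order.TTheory GRing.Theory Num.Theory.
Local Open Scope ring_scope.

(* A finite multigraph G_H: vertices V, edges E (parallel edges allowed since
   distinct edges may share endpoints), endpoint maps src/dst (no self-loops is
   a hypothesis of the theorem).  S is the set of secure edges; its complement
   ~: S is the set of insecure edges S^c. *)

Section Attacks.
Variables (V E : finType) (src dst : E -> V) (S : {set E}).
Variable R : realFieldType.
Variables (pJS pJc pI : R).

Definition delta (U : {set V}) : {set E} :=
  [set e | (src e \in U) != (dst e \in U)].

Definition is_cut (C : {set E}) : Prop :=
  exists U : {set V}, [/\ U != set0, U != setT & C = delta U].

Definition nS (C : {set E}) : nat := #|C :&: S|.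
Definition nSc (C : {set E}) : nat := #|C :\: S|.

Definition gen_attack (C J I : {set E}) : Prop :=
  [/\ is_cut C, J \subset C, I \subset (C :\: S) :\: J & I != set0].

Definition attack_cost (J I : {set E}) : R :=
  pJS * #|J :&: S|%:R + pJc * #|J :\: S|%:R + pI * #|I|%:R.

Definition detectable (C J I : {set E}) : Prop :=
  (#|C :\: J| < 2 * #|I|)%N.

Definition detectable_gen_attack (C J I : {set E}) : Prop :=
  gen_attack C J I /\ detectable C J I.

Definition optimal_detectable_attack (C J I : {set E}) : Prop :=
  detectable_gen_attack C J I /\
  forall C' J' I', detectable_gen_attack C' J' I' ->
    attack_cost J I <= attack_cost J' I'.

Definition feasA (C : {set E}) : Prop := is_cut C /\ (2 * nS C < #|C|)%N.
Definition weightA (C : {set E}) : R :=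
  (pI - pJc) * (nS C)%:R + pJc * (nSc C)%:R.
Definition producedA (C J I : {set E}) : Prop :=
  [/\ feasA C, (forall C', feasA C' -> weightA C <= weightA C'),
      I \subset C :\: S, #|I| = (nS C).+1 & J = (C :\: S) :\: I].

Definition feasB (C : {set E}) : Prop :=
  [/\ is_cut C, (#|C| <= 2 * nS C)%N & (0 < nSc C)%N].
Definition weightB (C : {set E}) : R :=
  pJS * (nS C)%:R + (pI - pJS) * (nSc C)%:R.
Definition producedB (C J I : {set E}) : Prop :=
  [/\ feasB C, (forall C', feasB C' -> weightB C <= weightB C'),
      I = C :\: S, J \subset C :&: S & #|J| = (nS C + 1 - nSc C)%N].

Definition produced (C J I : {set E}) : Prop :=
  producedA C J I \/ producedB C J I.

End Attacks.

(* Main.v *)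
Require Import Defs.
From HB Require Import structures.
From mathcomp Require Import all_boot all_order all_algebra.
From mathcomp Require Import zify ring lra.
Import Order.TTheory GRing.Theory Num.Theory.
Local Open Scope ring_scope.

Lemma cardsub (T : finType) (A : {set T}) k :
  (k <= #|A|)%N -> exists B : {set T}, B \subset A /\ #|B| = k.
Proof.
elim: k => [|k IH] hk; first by exists (set0 : {set T}); rewrite sub0set cards0.
have [B [sB cB]] := IH (ltnW hk).
have : (0 < #|A :\: B|)%N by rewrite cardsD (setIidPr sB) cB subn_gt0.
case/card_gt0P => x; rewrite inE => /andP[xB xA].
by exists (x |: B); rewrite subUset sub1set xA sB cardsU1 xB cB.
Qed.

Lemma exmin (R : realFieldType) (T : finType) (P : T -> Prop) (pb : pred T)
  (f : T -> R) : (forall x, reflect (P x) (pb x)) ->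
  forall x0, P x0 -> exists x, P x /\ forall y, P y -> f x <= f y.
Proof.
move=> hP x0 /hP px0; case: (arg_minP f px0) => x px hmin.
exists x; split; first exact/hP.
by move=> y /hP py; exact: hmin.
Qed.

Section Proof.
Variables (V E : finType) (src dst : E -> V) (S : {set E}).
Variables (R : realFieldType) (pJS pJc pI : R).

Lemma is_cutP C : reflect (is_cut src dst C)
  [exists U : {set V}, [&& U != set0, U != setT & C == delta src dst U]].
Proof.
apply: (iffP existsP) => [[U /and3P[a b /eqP c]]|[U [a b c]]]; exists U => //.
by rewrite a b c eqxx.
Qed.

Lemma feasAP C : reflect (feasA src dst S C)
  ([exists U : {set V}, [&& U != set0, U != setT & C == delta src dst U]]
    && (2 * nS S C < #|C|)%N).
Proof.
apply: (iffP andP) => [[/is_cutP a b]|[a b]]; split => //; exact/is_cutP.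
Qed.

Lemma feasBP C : reflect (feasB src dst S C)
  [&& [exists U : {set V}, [&& U != set0, U != setT & C == delta src dst U]],
    (#|C| <= 2 * nS S C)%N & (0 < nSc S C)%N].
Proof.
apply: (iffP and3P) => [[/is_cutP a b c]|[a b c]]; split => //; exact/is_cutP.
Qed.

Lemma costA C J I : producedA src dst S pJc pI C J I ->
  attack_cost S pJS pJc pI J I = weightA S pJc pI C + (pI - pJc) /\
  detectable_gen_attack src dst S C J I.
Proof.
case=> [[cutC hA] _ sI cI ->].
have hJS : (C :\: S :\: I) :&: S = set0.
  by apply/setP=> e; rewrite !inE; case: (e \in S); rewrite /= ?andbF.
have hJSc : (C :\: S :\: I) :\: S = C :\: S :\: I.
  by apply/setP=> e; rewrite !inE; case: (e \in S); rewrite /= ?andbF.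
have cJ : (#|C :\: S :\: I| + #|I| = nSc S C)%N.
  by rewrite cardsD (setIidPr sI) subnK // subset_leq_card.
have hC : (nS S C + nSc S C = #|C|)%N := cardsID S C.
have sJC : C :\: S :\: I \subset C.
  by apply/subsetP => e; rewrite !inE => /and3P[].
split.
  rewrite /attack_cost /weightA hJS hJSc cards0.
  have cJR : (#|C :\: S :\: I|%:R + (nS S C)%:R + 1 = (nSc S C)%:R :> R).
    by rewrite -cJ cI -addn1 !natrD addrA.
  have -> : (#|C :\: S :\: I|%:R = (nSc S C)%:R - (nS S C)%:R - 1 :> R) by lra.
  rewrite cI -natr1; ring.
split; last first.
  rewrite /detectable cardsD (setIidPr sJC); move: hA; rewrite /nS /nSc in cJ hC cI *.
  lia.
split => //.
  apply/subsetP => e eI; rewrite !inE.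
  have := subsetP sI e eI; rewrite !inE => /andP[-> ->]; by rewrite eI.
by rewrite -card_gt0 cI.
Qed.

Lemma costB C J I : producedB src dst S pJS pI C J I ->
  attack_cost S pJS pJc pI J I = weightB S pJS pI C + pJS /\
  detectable_gen_attack src dst S C J I.
Proof.
case=> [[cutC hle hpos] _ -> sJ cJ].
have sJS : J \subset S := subset_trans sJ (subsetIr _ _).
have sJC : J \subset C := subset_trans sJ (subsetIl _ _).
have hJS : J :&: S = J by apply/setIidPl.
have hJSc : J :\: S = set0 by apply/eqP; rewrite setD_eq0.
have hC : (nS S C + nSc S C = #|C|)%N := cardsID S C.
split.
  rewrite /attack_cost /weightB hJS hJSc cards0.
  have cJR : (#|J|%:R + (nSc S C)%:R = (nS S C)%:R + 1 :> R).
    rewrite -natrD natr1; congr (_%:R); move: hle; rewrite cJ /nS /nSc in hC *; lia.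
  have -> : (#|J|%:R = (nS S C)%:R + 1 - (nSc S C)%:R :> R) by lra.
  rewrite /nSc; ring.
split; last first.
  rewrite /detectable cardsD (setIidPr sJC); move: hle hpos; rewrite cJ /nS /nSc in hC *.
  lia.
split => //.
  apply/subsetP => e; rewrite !inE => /andP[eS eC]; rewrite eS eC !andbT /=.
  apply/negP => eJ; by have := subsetP sJS e eJ; rewrite (negbTE eS).
by rewrite -card_gt0.
Qed.


Lemma buildA C0 : feasA src dst S C0 ->
  exists C J I, producedA src dst S pJc pI C J I.
Proof.
move=> f0.
have [C [fC minC]] := @exmin R _ _ _ (weightA S pJc pI) feasAP C0 f0.
have [cutC hA] := fC.
have hC : (nS S C + nSc S C = #|C|)%N := cardsID S C.
have [I [sI cI]] : exists I : {set E}, I \subset C :\: S /\ #|I| = (nS S C).+1.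
  apply: cardsub; move: hA; rewrite -hC /nSc; lia.
by exists C, (C :\: S :\: I), I; split.
Qed.

Lemma buildB C0 : feasB src dst S C0 ->
  exists C J I, producedB src dst S pJS pI C J I.
Proof.
move=> f0.
have [C [fC minC]] := @exmin R _ _ _ (weightB S pJS pI) feasBP C0 f0.
have [cutC hle hpos] := fC.
have hC : (nS S C + nSc S C = #|C|)%N := cardsID S C.
have [J [sJ cJ]] : exists J : {set E}, J \subset C :&: S /\ #|J| = (nS S C + 1 - nSc S C)%N.
  apply: cardsub; move: hle hpos; rewrite -hC /nS; lia.
by exists C, J, (C :\: S); split.
Qed.

Hypotheses (h0 : 0 < pJc) (h1 : pJc <= pJS) (h2 : pJS <= pI)
  (h3 : pJc < pI / 2) (h4 : pI <= pJS + pJc).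

Lemma lower C J I : detectable_gen_attack src dst S C J I ->
  (feasA src dst S C /\ weightA S pJc pI C + (pI - pJc) <= attack_cost S pJS pJc pI J I)
  \/ (feasB src dst S C /\ weightB S pJS pI C + pJS <= attack_cost S pJS pJc pI J I).
Proof.
move: (h0) (h1) (h2) (h3) (h4) => H0 H1 H2 H3 H4.
case=> [[cutC sJ sI I0] det].
have ha : (#|J :&: S| <= nS S C)%N by apply: subset_leq_card; apply: setSI.
have hsi : (#|I| <= #|C :\: S :\: J|)%N by apply: subset_leq_card.
have hE1 : (C :\: S) :&: J = J :\: S.
  apply/setP=> e; rewrite !inE; case eJ: (e \in J); rewrite /= ?andbF ?andbT //.
  by rewrite (subsetP sJ e eJ) andbT.
have hb : (#|C :\: S :\: J| = nSc S C - #|J :\: S|)%N by rewrite cardsD hE1.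
have hi : (0 < #|I|)%N by rewrite card_gt0.
have hCJ : #|C :\: J| = (#|C| - #|J|)%N by rewrite cardsD (setIidPr sJ).
have hJ : (#|J :&: S| + #|J :\: S| = #|J|)%N := cardsID S J.
have hC : (nS S C + nSc S C = #|C|)%N := cardsID S C.
have hbi : (#|J :\: S| + #|I| <= nSc S C)%N by move: hsi; rewrite hb; lia.
have hdet : (nS S C + nSc S C + 1 <= 2 * #|I| + #|J :&: S| + #|J :\: S|)%N.
  move: det; rewrite /detectable hCJ -hC -hJ; lia.
rewrite /attack_cost /weightA /weightB.
set a := #|J :&: S| in ha hbi hdet hJ *.
set b := #|J :\: S| in hbi hdet hJ *.
set i := #|I| in hi hbi hdet *.
set n1 := nS S C in ha hdet hC *.
set n2 := nSc S C in hbi hdet hC *.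
have fA : (2 * n1 < #|C|)%N -> feasA src dst S C by move=> h; split.
have fB : ~~ (2 * n1 < #|C|)%N -> feasB src dst S C.
  rewrite -leqNgt => h; split => //; move: hbi hi; rewrite /n2; lia.
clearbody a b i n1 n2.
have ra : (a%:R <= n1%:R :> R) by rewrite ler_nat.
have rbi : (b%:R + i%:R <= n2%:R :> R) by rewrite -natrD ler_nat.
have ri : (1 <= i%:R :> R) by rewrite ler1n.
have rdet : (n1%:R + n2%:R + 1 <= 2 * i%:R + a%:R + b%:R :> R).
  by move: hdet; rewrite -(ler_nat R) !natrD; lra.
have a0 : (0 <= a%:R :> R) by [].
have b0 : (0 <= b%:R :> R) by [].
have h3x : 2 * pJc < pI by move: H3; rewrite ltr_pdivlMr //; lra.
case: (ltnP (2 * n1) #|C|) => hc; [left|right].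
  split; first exact: fA.
  have f1 : 0 <= pI - pJc by lra.
  have g1 : 0 <= i%:R - n1%:R + a%:R - (n2%:R - b%:R - i%:R) - 1 :> R by lra.
  have f2 : 0 <= pJS + pJc - pI by lra.
  have f3 : 0 <= pI - 2 * pJc by lra.
  have g3 : 0 <= n2%:R - b%:R - i%:R :> R by lra.
  have p1 := mulr_ge0 f1 g1.
  have p2 := mulr_ge0 f2 a0.
  have p3 := mulr_ge0 f3 g3.
  nra.
split; first by apply: fB; rewrite -leqNgt.
have f1 : 0 <= pJS by lra.
have g1 : 0 <= a%:R - (n1%:R - i%:R + (n2%:R - b%:R - i%:R) + 1) :> R by lra.
have f2 : 0 <= pJS - pJc by lra.
have g2 : 0 <= n2%:R - b%:R - i%:R :> R by lra.
have f3 : 0 <= pJS + pJc - pI by lra.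
have g3 : 0 <= n2%:R - i%:R :> R by lra.
have p1 := mulr_ge0 f1 g1.
have p2 := mulr_ge0 f2 g2.
have p3 := mulr_ge0 f3 g3.
nra.
Qed.

End Proof.
Arguments costA {V E src dst S R} pJS {pJc pI C J I}.
Arguments costB {V E src dst S R} {pJS} pJc {pI C J I}.
Arguments buildA {V E src dst S R} pJc pI {C0}.
Arguments buildB {V E src dst S R} pJS pI {C0}.
Arguments lower {V E src dst S R pJS pJc pI} h0 h1 h2 h3 h4 {C J I}.

Theorem theorem6 (V E : finType) (src dst : E -> V) (S : {set E})
  (R : realFieldType) (pJS pJc pI : R)
  (no_loop : forall e, src e != dst e)
  (h0 : 0 < pJc) (h1 : pJc <= pJS) (h2 : pJS <= pI)
  (h3 : pJc < pI / 2) (h4 : pI <= pJS + pJc) :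
  (* every produced attack of minimum cost among the produced attacks
     is an optimal detectable generalized attack *)
  (forall C J I,
     produced src dst S pJS pJc pI C J I ->
     (forall C' J' I', produced src dst S pJS pJc pI C' J' I' ->
        attack_cost S pJS pJc pI J I <= attack_cost S pJS pJc pI J' I') ->
     optimal_detectable_attack src dst S pJS pJc pI C J I)
  /\
  (* and the set of produced attacks is nonempty whenever a detectable
     generalized attack exists *)
  ((exists C J I, detectable_gen_attack src dst S C J I) ->
   exists C J I, produced src dst S pJS pJc pI C J I).
Proof.
split.
  move=> C J I hp hmin; split.
    by case: hp => [/(costA pJS) []|/(costB pJc) []].
  move=> C' J' I' hd.
  case: (lower h0 h1 h2 h3 h4 hd) => [[fA le]|[fB le]].
    have [C1 [J1 [I1 hA1]]] := buildA pJc pI fA.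
    have [e1 _] := costA pJS hA1.
    apply: le_trans (hmin _ _ _ (or_introl hA1)) _; rewrite e1.
    apply: le_trans le; rewrite lerD2r.
    by case: hA1 => _ m _ _ _; exact: m.
  have [C1 [J1 [I1 hB1]]] := buildB pJS pI fB.
  have [e1 _] := costB pJc hB1.
  apply: le_trans (hmin _ _ _ (or_intror hB1)) _; rewrite e1.
  apply: le_trans le; rewrite lerD2r.
  by case: hB1 => _ m _ _ _; exact: m.
case=> C [J [I hd]].
case: (lower h0 h1 h2 h3 h4 hd) => [[fA _]|[fB _]].
  have [C1 [J1 [I1 hA1]]] := buildA pJc pI fA.
  by exists C1, J1, I1; left.
have [C1 [J1 [I1 hB1]]] := buildB pJS pI fB.
by exists C1, J1, I1; right.
Qed.
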